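(* Let $H$ be an $r$-graph with $h$ vertices. If $H$ is not $2$-locally large, then $C_r(n,H)\le 2r+1$ for all $n$. If $H$ is $2$-locally large, then $$C_r(n,H)\ge c\left(\frac{\log^{(r)}(n)}{\log^{(r+1)}(n)}\right)^{\frac{1}{(r+1)^2}}$$ for some constant $c=c(r,h)>0$, where $\log^{(s)}(n)$ denotes the $s$-fold iterated logarithm of $n$.
   Context: An $r$-graph is an $r$-uniform hypergraph; $K_n^{(r)}$ is the complete $r$-graph on $n$ vertices. A copy of an $r$-graph $H$ in $K_n^{(r)}$ is a subhypergraph isomorphic to $H$. An $(n,r,H)$-local coloring with $k$ colors is a family of edge-colorings $f_v:E(K_n^{(r)})\to[k]$, one per vertex $v$, such that for every copy $T$ of $H$ there is $u\in V(T)$ with $f_u$ injective on $E(T)$. $C_r(n,H)$ is the minimum such $k$. Let $H$ be an $r$-graph on $m$ vertices and $\sigma:V(H)\to[m]$ a bijection. For $x\in V(H)$ and $1\le i\le r$, $T_x^i$ is the set of edges $e\ni x$ such that $\sigma(x)$ is the $i$-th smallest of the values $\sigma(v)$, $v\in e$. For $r+1\le i\le 2r+1$, $T_x^i$ is the set of edges $e\not\ni x$ such that $\sigma(x)$ is the $(i-r)$-th smallest among the values $\sigma(v)$, $v\in e\cup\{x\}$. $H$ is $2$-locally large if there exists a bijection $\sigma:V(H)\to[m]$ such that for every vertex $x\in V(H)$ some $T_x^i$, $i\in[2r+1]$, contains at least two edges. *)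

(* Defs.v *)
From mathcomp Require Import all_boot perm.
From Stdlib Require Import Reals ClassicalEpsilon.

Set Implicit Arguments.
Unset Strict Implicit.
Unset Printing Implicit Defensive.

Definition is_rgraph (r h : nat) (H : {set {set 'I_h}}) : Prop :=
  forall e, e \in H -> #|e| = r.

(* rank of sigma(x) among the sigma-values of e \cup {x}, minus one:
   number of v in e with sigma v < sigma x. *)
Definition below (h : nat) (sigma : {perm 'I_h}) (x : 'I_h) (e : {set 'I_h}) : nat :=
  #|[set v in e | (sigma v < sigma x)%N]|.

Definition Tset (r h : nat) (H : {set {set 'I_h}}) (sigma : {perm 'I_h})
    (x : 'I_h) (i : nat) : {set {set 'I_h}} :=
  [set e in H |
    if (i <= r)%N then (x \in e) && ((below sigma x e).+1 == i)
    else (x \notin e) && ((below sigma x e).+1 + r == i)].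

Definition two_locally_large (r h : nat) (H : {set {set 'I_h}}) : Prop :=
  exists sigma : {perm 'I_h}, forall x : 'I_h,
    exists i : nat, [/\ (1 <= i)%N, (i <= 2 * r + 1)%N & (2 <= #|Tset r H sigma x i|)%N].

Definition copy_edges (h n : nat) (H : {set {set 'I_h}}) (phi : 'I_h -> 'I_n)
  : {set {set 'I_n}} := [set phi @: e | e : {set 'I_h} in H].

(* An (n,r,H)-local colouring with k colours: f v colours the edges of
   K_n^(r) (the r-subsets of 'I_n) with colours in [k] = {0,..,k-1};
   its values on other subsets are irrelevant. *)
Definition local_coloring (r h n k : nat) (H : {set {set 'I_h}}) : Prop :=
  exists f : 'I_n -> {set 'I_n} -> nat,
    (forall v (A : {set 'I_n}), #|A| = r -> (f v A < k)%N) /\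
    forall phi : 'I_h -> 'I_n, injective phi ->
      exists u, u \in [set phi x | x : 'I_h] /\
        forall A B, A \in copy_edges H phi -> B \in copy_edges H phi ->
          f u A = f u B -> A = B.

(* Boolean version (classically decided), needed for ex_minn.  The
   disjunct (h == 0) only serves to make the minimum well defined in the
   degenerate case of a vertexless H, which the theorem excludes. *)
Definition lc_pred (r h n : nat) (H : {set {set 'I_h}}) : pred nat :=
  fun k => (if excluded_middle_informative (local_coloring r n k H) then true else false)
           || (h == 0%N).

Lemma lc_exists (r h n : nat) (H : {set {set 'I_h}}) : exists k, lc_pred r n H k.
Proof.
exists #|{set 'I_n}|; rewrite /lc_pred.
case: h H => [|h] H; first by rewrite orbT.
case: excluded_middle_informative => // nP; exfalso; apply: nP.
exists (fun _ A => nat_of_ord (enum_rank A)); split; first by move=> *; exact: ltn_ord.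
move=> phi _; exists (phi ord0); split; first by apply/imsetP; exists ord0.
by move=> A B _ _ /val_inj /enum_rank_inj.
Qed.

Definition C_r (r h n : nat) (H : {set {set 'I_h}}) : nat := ex_minn (lc_exists r n H).

Definition iter_log (s n : nat) : R := iter s ln (INR n).

Definition lower_bound (r n : nat) : R :=
  Rpower (iter_log r n / iter_log r.+1 n) (1 / INR (r.+1 * r.+1)).

(* Main.v *)
Require Import Defs.
From mathcomp Require Import all_boot perm zify.
From Stdlib Require Import Classical ClassicalEpsilon.
Set Implicit Arguments. Unset Strict Implicit. Unset Printing Implicit Defensive.

Lemma pigeon (n : nat) (C : finType) (g : 'I_n -> C) (Z : {set 'I_n}) :
  exists2 Z' : {set 'I_n}, Z' \subset Z &
    (forall a b, a \in Z' -> b \in Z' -> g a = g b) /\ #|Z| <= #|C| * #|Z'|.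
Proof.
have [->|[z zZ]] := set_0Vmem Z.
  by exists set0 => //; split=> [a b|]; rewrite ?inE // cards0.
pose F col := #|[set x in Z | g x == col]|.
pose c0 := [arg max_(i > g z) F i].
exists [set x in Z | g x == c0].
  by apply/subsetP=> x; rewrite inE => /andP[].
split.
  by move=> a b; rewrite !inE => /andP[_ /eqP->] /andP[_ /eqP->].
have -> : #|Z| = \sum_(col : C) F col.
  rewrite -sum1_card (partition_big g predT) //=.
  apply: eq_bigr => col _; rewrite /F -sum1_card; apply: eq_bigl => x.
  by rewrite inE.
rewrite -sum_nat_const; apply: leq_sum => col _.
rewrite /c0; case: arg_maxnP => //= i _ /(_ col); exact.
Qed.

Lemma refine (n : nat) (C : finType) (K : eqType) (G : K -> 'I_n -> C)
  (gs : seq K) (Z : {set 'I_n}) :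
  exists2 Z' : {set 'I_n}, Z' \subset Z &
    (forall g, g \in gs -> forall a b, a \in Z' -> b \in Z' -> G g a = G g b) /\
    #|Z| <= #|C| ^ size gs * #|Z'|.
Proof.
elim: gs Z => [|g gs IH] Z.
  by exists Z => //; split=> //; rewrite expn0 mul1n.
have [Z1 sZ1 [h1 c1]] := pigeon (G g) Z.
have [Z2 sZ2 [h2 c2]] := IH Z1.
exists Z2; first exact: subset_trans sZ2 sZ1.
split.
  move=> g'; rewrite in_cons => /orP[/eqP->|/h2 //] a b aZ bZ.
  by apply: h1; apply: (subsetP sZ2).
apply: (leq_trans c1); rewrite /= expnS -mulnA leq_mul2l c2 orbT //.
Qed.
Lemma expn_monol m n e : m <= n -> m ^ e <= n ^ e.
Proof. by move=> le; elim: e => [|e IH]; rewrite ?expn0 // !expnS leq_mul. Qed.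
Lemma ffact_le_exp j s : j ^_ s <= j ^ s.
Proof.
elim: s j => [|s IH] j; first by rewrite ffactn0 expn0.
rewrite ffactnS expnS leq_mul2l; apply/orP; right.
apply: leq_trans (IH _) _; apply: expn_monol; exact: leq_pred.
Qed.
Lemma bin_le_exp j s : 'C(j, s) <= j ^ s.
Proof.
apply: leq_trans (ffact_le_exp j s); by rewrite -bin_ffact leq_pmulr // fact_gt0.
Qed.

Section EH.
Variables (n : nat) (C : finType) (c : {set 'I_n} -> C) (s L : nat).

Definition below_all (T : {set 'I_n}) (y : 'I_n) := forall t, t \in T -> t < y.

Definition inv (P Z : {set 'I_n}) :=
  (forall p z, p \in P -> z \in Z -> p < z) /\
  forall T : {set 'I_n}, T \subset P -> #|T| = s.+1 -> forall y y', y \in P :|: Z -> y' \in P :|: Z ->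
    below_all T y -> below_all T y' -> c (y |: T) = c (y' |: T).

Let D := #|C| ^ (L ^ s).

Fixpoint G t := if t is t'.+1 then D * G t' + 1 else 0.

Lemma EH_iter t : forall P Z, inv P Z -> #|P| + t <= L -> G t <= #|Z| ->
  exists P' Z', [/\ inv P' Z', P' :|: Z' \subset P :|: Z & #|P'| = #|P| + t].
Proof.
elim: t => [|t IH] P Z iPZ hL hG.
  by exists P, Z; rewrite addn0.
have [z0 z0Z] : exists z, z \in Z.
  by apply/set0Pn; rewrite -card_gt0; apply: leq_trans hG; rewrite /= addn1.
pose x := [arg min_(i < z0 in Z) (i : nat)].
have [xZ xmin] : x \in Z /\ forall z, z \in Z -> x <= z.
  by rewrite /x; case: arg_minnP => // i iZ im; split => // z /im.
pose Us := enum [set U : {set 'I_n} | U \subset P & #|U| == s].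
have [Z' sZ' [hc hcard]] := refine (fun U z => c (z |: (x |: U))) Us (Z :\ x).
have xP : x \notin P by apply/negP => xP; have := iPZ.1 _ _ xP xZ; rewrite ltnn.
have sizeUs : size Us <= L ^ s.
  rewrite /Us -cardE cards_draws; apply: leq_trans (bin_le_exp _ _) _.
  by apply: expn_monol; apply: leq_trans (leq_addr _ _) hL.
have Cpos : 0 < #|C| by apply/card_gt0P; exists (c set0).
have hZ' : G t <= #|Z'|.
  have : D * G t <= D * #|Z'|.
    apply: leq_trans (_ : #|Z :\ x| <= _).
      by move: hG; rewrite (cardsD1 x Z) xZ /= add1n addn1 ltnS.
    apply: leq_trans hcard _; rewrite leq_mul2r; apply/orP; right.
    by apply: leq_pexp2l.
  rewrite leq_mul2l => /orP[|//]; rewrite /D expn_eq0; case: (ltngtP #|C| 0) Cpos => // ->.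
have iP'Z' : inv (x |: P) Z'.
  split.
    move=> p z; rewrite in_setU1 => /orP[/eqP->|pP] zZ';
      have := subsetP sZ' _ zZ'; rewrite in_setD1 => /andP[zx zZ].
      by rewrite ltn_neqAle xmin // andbT; apply: contra zx => /eqP/val_inj->.
    exact: iPZ.1.
  move=> T sT cT y y' yin y'in by' by''.
  have sub : (x |: P) :|: Z' \subset P :|: Z.
    apply/subsetP => u; rewrite !inE => /orP[/orP[/eqP->|->]|uZ'] //.
      by rewrite xZ orbT.
    by have := subsetP sZ' _ uZ'; rewrite inE => /andP[_ ->]; rewrite orbT.
  case: (boolP (x \in T)) => xT; last first.
    apply: iPZ.2 => //; try exact: (subsetP sub).
    apply/subsetP => u uT; have := subsetP sT _ uT; rewrite in_setU1.
    by case/orP => // /eqP ux; rewrite -ux uT in xT.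
  have inZ' : forall u, u \in (x |: P) :|: Z' -> below_all T u -> u \in Z'.
    move=> u; rewrite !inE => /orP[/orP[/eqP ->|uP]|] // ub.
      by have := ub _ xT; rewrite ltnn.
    by have := ub _ xT; have := iPZ.1 _ _ uP xZ => /ltn_trans h /h; rewrite ltnn.
  have TE : T = x |: (T :\ x) by rewrite setD1K.
  rewrite TE; apply: (hc (T :\ x)); last 2 first.
    exact: inZ'.
    exact: inZ'.
  rewrite mem_enum inE; apply/andP; split.
    apply/subsetP => u; rewrite in_setD1 => /andP[ux uT].
    by have := subsetP sT _ uT; rewrite in_setU1 (negbTE ux).
  by move: cT; rewrite (cardsD1 x T) xT add1n => -[->].
have cx : #|x |: P| = #|P|.+1 by rewrite cardsU1 xP add1n.
have hL' : #|x |: P| + t <= L by rewrite cx addSnnS.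
have [P'' [Z'' [i'' s'' c'']]] := IH (x |: P) Z' iP'Z' hL' hZ'.
exists P'', Z''; split => //; last by rewrite c'' cx addSnnS.
apply: subset_trans s'' _.
apply/subsetP => u; rewrite !inE => /orP[/orP[/eqP->|->]|uZ'] //.
  by rewrite xZ orbT.
by have := subsetP sZ' _ uZ'; rewrite inE => /andP[_ ->]; rewrite orbT.
Qed.


Lemma G_bound t : G t <= (D + 1) ^ t.
Proof.
elim: t => [|t IH] //=; rewrite expnS.
have h1 : 0 < (D + 1) ^ t by rewrite expn_gt0 addn1.
nia.
Qed.

Lemma EH (A : {set 'I_n}) : (D + 1) ^ L <= #|A| ->
  exists X : {set 'I_n}, [/\ X \subset A, #|X| = L &
    forall T : {set 'I_n}, T \subset X -> #|T| = s.+1 -> forall y y', y \in X -> y' \in X ->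
    below_all T y -> below_all T y' -> c (y |: T) = c (y' |: T)].
Proof.
move=> hA.
have i0 : inv set0 A.
  split=> [p z|T sT cT]; first by rewrite inE.
  by move: sT; rewrite subset0 => /eqP TE; rewrite TE cards0 in cT.
have hL0 : #|(set0 : {set 'I_n})| + L <= L by rewrite cards0.
have [P' [Z' [[_ i2] sPZ cP]]] := EH_iter i0 hL0 (leq_trans (G_bound L) hA).
exists P'; split.
- by apply: subset_trans (subsetUl _ _) (subset_trans sPZ _); rewrite set0U.
- by rewrite cP cards0.
move=> T sT cT y y' yX y'X; apply: i2 => //; by rewrite inE ?yX ?y'X.
Qed.
End EH.

Lemma max_split (n : nat) (S : {set 'I_n}) : 0 < #|S| ->
  exists2 ms, ms \in S & below_all (S :\ ms) ms.
Proof.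
case/card_gt0P => x0 x0S.
exists [arg max_(i > x0 in S) (i : nat)]; first by case: arg_maxnP.
case: arg_maxnP => // i iS im t; rewrite in_setD1 => /andP[ti tS].
have le : t <= i by exact: im.
by rewrite ltn_neqAle le andbT; apply: contra ti => /eqP/val_inj->.
Qed.

Fixpoint Rm (s m Q : nat) : nat :=
  match s with
  | 0 => m
  | s1.+1 => match s1 with
             | 0 => Q * m
             | s'.+1 => ((Q ^ ((Rm s1 m Q).+1 ^ s') + 1) ^ (Rm s1 m Q).+1)
             end
  end.

Lemma ramsey (n : nat) (C : finType) s : forall (c : {set 'I_n} -> C) m (A : {set 'I_n}),
  Rm s.+1 m #|C| <= #|A| -> exists W : {set 'I_n}, [/\ W \subset A, m <= #|W| &
    forall S1 S2 : {set 'I_n}, S1 \subset W -> S2 \subset W -> #|S1| = s.+1 -> #|S2| = s.+1 -> c S1 = c S2].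
Proof.
elim: s => [|s IH] c m A.
  move=> /= hA; have [Z' sZ' [hc hcard]] := pigeon (fun z => c [set z]) A.
  have Cpos : 0 < #|C| by apply/card_gt0P; exists (c set0).
  exists Z'; split => //.
    by rewrite -(leq_pmul2l Cpos); apply: leq_trans hA hcard.
  move=> S1 S2 s1 s2 /eqP/cards1P[a E1] /eqP/cards1P[b E2].
  by rewrite E1 E2 in s1 s2 *; apply: hc; rewrite -sub1set.
rewrite [Rm _ _ _]/= -/(Rm s.+1 m #|C|) => hA.
have [X [sXA cX hX]] := EH c (s := s) hA.
have X0 : 0 < #|X| by rewrite cX.
have [mx mxX bmx] := max_split X0.
have hX' : Rm s.+1 m #|C| <= #|X :\ mx|.
  by move: (cardsD1 mx X); rewrite mxX cX add1n => -[<-].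
have [W [sW mW hW]] := IH (fun T => c (mx |: T)) m (X :\ mx) hX'.
have sWX : W \subset X by apply: subset_trans sW (subsetDl _ _).
exists W; split => //; first exact: subset_trans sWX sXA.
have key : forall S : {set 'I_n}, S \subset W -> #|S| = s.+2 ->
    exists T : {set 'I_n}, [/\ T \subset W, #|T| = s.+1 & c S = c (mx |: T)].
  move=> S sS cS; have S0 : 0 < #|S| by rewrite cS.
  have [ms msS bms] := max_split S0.
  have cT : #|S :\ ms| = s.+1 by move: cS; rewrite (cardsD1 ms S) msS add1n => -[].
  exists (S :\ ms); split => //; first exact: subset_trans (subsetDl _ _) sS.
  rewrite -{1}(setD1K msS); apply: hX => //.
  - exact: subset_trans (subsetDl _ _) (subset_trans sS sWX).
  - exact: subsetP (subset_trans sS sWX) _ msS.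
  move=> t tin; apply: bmx.
  exact: subsetP sW _ (subsetP sS _ (subsetP (subsetDl _ _) _ tin)).
move=> S1 S2 s1 s2 c1 c2.
have [T1 [t1 ct1 ->]] := key _ s1 c1.
have [T2 [t2 ct2 ->]] := key _ s2 c2.
exact: hW.
Qed.


Fixpoint tw (j y : nat) : nat := if j is j'.+1 then 2 ^ tw j' y else y.

Lemma tw_mono j y y' : y <= y' -> tw j y <= tw j y'.
Proof. by move=> le; elim: j => //= j IH; rewrite leq_exp2l. Qed.

Lemma pow2_gt d : d < 2 ^ d.
Proof. exact: ltn_expl. Qed.

Lemma tw_add j y d : tw j y + d <= tw j (y + d).
Proof.
elim: j => //= j IH.
apply: leq_trans (_ : 2 ^ (tw j y + d) <= _); last by rewrite leq_exp2l.
rewrite expnD; have := pow2_gt d; have : 0 < 2 ^ tw j y by rewrite expn_gt0.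
nia.
Qed.

Lemma tw_lin j a b y : 0 < a -> 0 < y -> a * tw j y + b <= tw j (a * y + b).
Proof.
case: j => [|j] a0 y0 //=.
have E : a * y + b = y + ((a - 1) * y + b) by nia.
rewrite E; apply: leq_trans (_ : 2 ^ (tw j y + ((a - 1) * y + b)) <= _); last first.
  by rewrite leq_exp2l // tw_add.
rewrite expnD; set d := (a - 1) * y + b.
have hd : a - 1 + b <= d by rewrite /d; nia.
have := pow2_gt d; have : 0 < 2 ^ tw j y by rewrite expn_gt0.
nia.
Qed.

Section Bound.
Variables (m Q q : nat).
Hypotheses (m0 : 0 < m) (Q0 : 0 < Q) (Qq : Q <= 2 ^ q).

Fixpoint Y s := if s is s'.+1 then (q + 2 + s') * Y s' else Q * m + 1.

Lemma Y_pos s : 0 < Y s.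
Proof. elim: s => /= [|s IH]; first by rewrite addn1. by rewrite muln_gt0 IH addn2. Qed.

Lemma Rm_step L s : 0 < L -> ((Q ^ (L ^ s) + 1) ^ L).+1 <= 2 ^ ((q + 1) * L ^ s.+1 + 1).
Proof.
move=> L0.
have h1 : Q ^ (L ^ s) + 1 <= 2 ^ (q * L ^ s + 1).
  rewrite expnD expn1 expnM; have := @expn_monol Q (2 ^ q) (L ^ s) Qq.
  have : 0 < Q ^ (L ^ s) by rewrite expn_gt0 Q0.
  nia.
have h2 : (Q ^ (L ^ s) + 1) ^ L <= 2 ^ ((q * L ^ s + 1) * L).
  by rewrite expnM; apply: expn_monol.
apply: leq_trans (_ : (2 ^ ((q * L ^ s + 1) * L)).+1 <= _); first by [].
apply: leq_trans (_ : 2 ^ ((q * L ^ s + 1) * L + 1) <= _).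
  rewrite expnD expn1; have : 0 < 2 ^ ((q * L ^ s + 1) * L) by rewrite expn_gt0.
  nia.
rewrite leq_exp2l // leq_add2r expnSr.
have : 0 < L ^ s by rewrite expn_gt0 L0.
nia.
Qed.

Lemma Rm_tw s : (Rm s.+1 m Q).+1 <= tw s (Y s).
Proof.
elim: s => [|s IH]; first by rewrite /= addn1.
have -> : Rm s.+2 m Q = (Q ^ ((Rm s.+1 m Q).+1 ^ s) + 1) ^ (Rm s.+1 m Q).+1 by [].
set L := (Rm s.+1 m Q).+1 in IH *.
apply: leq_trans (@Rm_step L s (ltn0Sn _)) _.
have Ys := Y_pos s; clearbody L.
case: s IH Ys => [|s] IH Ys.
  rewrite /= leq_exp2l // expn1; move: IH; rewrite /= => IH.
  nia.
rewrite [tw s.+2 _]/= leq_exp2l //.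
move: IH; rewrite [tw s.+1 _]/= => IH.
set a := tw s (Y s.+1) in IH *.
have hL : L ^ s.+2 <= 2 ^ (a * s.+2) by rewrite expnM; apply: expn_monol.
apply: leq_trans (_ : 2 ^ (a * s.+2 + q + 1) <= _).
  rewrite -addnA expnD; have := pow2_gt q; have : 0 < 2 ^ (a * s.+2) by rewrite expn_gt0.
  rewrite expnD expn1. nia.
rewrite leq_exp2l //.
apply: leq_trans (_ : tw s (s.+2 * Y s.+1 + (q + 1)) <= _).
  rewrite mulnC -addnA; exact: tw_lin.
apply: tw_mono; rewrite /= in Ys *; nia.
Qed.
End Bound.

Lemma Y_poly m k M r : 0 < m -> 0 < k ->
  Y m (k ^ M) (k * M) r <= 2 * m * ((M + r + 2) * k) ^ (M + r).
Proof.
move=> m0 k0; set K := M + r + 2.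
suff H : forall s, s <= r -> Y m (k ^ M) (k * M) s <= 2 * m * (K * k) ^ (M + s).
  exact: H.
elim=> [|s IH] hs /=.
  rewrite addn0; have : k ^ M <= (K * k) ^ M by apply: expn_monol; rewrite leq_pmull // /K addn2.
  nia.
have := IH (ltnW hs); rewrite (addnS M s) expnS.
have : k * M + 2 + s <= K * k by rewrite /K; nia.
nia.
Qed.

Lemma main_nat m k r : 0 < m -> 0 < k ->
  (Rm r.+1 m (k ^ (2 * r + 1))).+1 <=
    tw r (2 * m * (3 * r + 3) ^ (3 * r + 1) * k ^ (r.+1 * r.+1)).
Proof.
move=> m0 k0.
have Q0 : 0 < k ^ (2 * r + 1) by rewrite expn_gt0 k0.
have Qq : k ^ (2 * r + 1) <= 2 ^ (k * (2 * r + 1)).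
  by rewrite expnM; apply: expn_monol; exact: ltnW (pow2_gt k).
apply: leq_trans (@Rm_tw m _ _ m0 Q0 Qq r) _.
apply: tw_mono; apply: leq_trans (@Y_poly m k (2 * r + 1) r m0 k0) _.
have -> : 2 * r + 1 + r + 2 = 3 * r + 3 by nia.
have -> : 2 * r + 1 + r = 3 * r + 1 by nia.
rewrite expnMn mulnA leq_mul2l; apply/orP; right.
rewrite leq_pexp2l //; nia.
Qed.

Fixpoint tw3 (j y : nat) : nat := if j is j'.+1 then 3 ^ tw3 j' y else y.

Definition rkn n (A : {set 'I_n}) (v : 'I_n) : nat := #|[set u in A | u < v]|.

Lemma rk_mono n (S : {set 'I_n}) (u v : 'I_n) : u \in S -> u < v -> rkn S u < rkn S v.
Proof.
move=> uS uv; apply: proper_card; apply/properP; split.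
  by apply/subsetP => t; rewrite !inE => /andP[-> tu]; exact: ltn_trans tu uv.
by exists u; rewrite !inE ?uS ?uv ?ltnn.
Qed.

Lemma rk_inj n (S : {set 'I_n}) (u v : 'I_n) : u \in S -> v \in S -> rkn S u = rkn S v -> u = v.
Proof.
move=> uS vS e; case: (ltngtP u v) => [lt|lt|]; last exact: val_inj.
  by have := rk_mono uS lt; rewrite e ltnn.
by have := rk_mono vS lt; rewrite e ltnn.
Qed.

Lemma mem_imset_injE (aT rT : finType) (f : aT -> rT) (A : {set aT}) x :
  injective f -> (f x \in f @: A) = (x \in A).
Proof.
move=> inj; apply/imsetP/idP => [[y yA /inj ->]|xA] //.
by exists x.
Qed.

Lemma rk_img h n (phi : 'I_h -> 'I_n) (sigma : {perm 'I_h}) :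
  injective phi -> (forall a b, (phi a < phi b) = (sigma a < sigma b)) ->
  forall (e : {set 'I_h}) x, rkn (phi @: e) (phi x) = below sigma x e.
Proof.
move=> inj mono e x; rewrite /rkn /below -(card_imset _ inj).
suff -> : [set u in phi @: e | u < phi x] = phi @: [set v in e | sigma v < sigma x] by [].
apply/setP => u; rewrite inE; apply/andP/imsetP.
  case=> /imsetP[v ve ->] lt; exists v => //.
  by rewrite inE ve -mono.
case=> v; rewrite inE => /andP[ve lt] ->; split; first exact: imset_f.
by rewrite mono.
Qed.

Definition ith n (S : {set 'I_n}) (i : nat) : option 'I_n := [pick v in S | rkn S v == i].

Lemma ith_eq n (S : {set 'I_n}) v j : v \in S -> rkn S v = j -> ith S j = Some v.
Proof.
move=> vS rv; rewrite /ith; case: pickP => [u /andP[uS /eqP ru]|/(_ v)].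
  by congr Some; apply: (rk_inj uS vS); rewrite ru rv.
by rewrite vS rv eqxx.
Qed.

Section Order.
Variables (h n : nat) (phi : 'I_h -> 'I_n) (inj : injective phi).

Definition rho (x : 'I_h) : nat := #|[set y | phi y < phi x]|.

Lemma rho_lt x : rho x < h.
Proof.
apply: (@leq_trans #|[set: 'I_h]|); last by rewrite cardsT card_ord.
rewrite /rho; apply: proper_card; apply/properP; split.
  exact: subsetT.
by exists x; rewrite !inE ?ltnn.
Qed.

Lemma rho_mono a b : phi a < phi b -> rho a < rho b.
Proof.
move=> lt; apply: proper_card; apply/properP; split.
  by apply/subsetP => t; rewrite !inE => tu; exact: ltn_trans tu lt.
by exists a; rewrite !inE ?lt ?ltnn.
Qed.

Lemma rho_inj : injective (fun x => Ordinal (rho_lt x)).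
Proof.
move=> a b /(congr1 val) /= e; apply: inj.
case: (ltngtP (phi a) (phi b)) => [lt|lt|]; last exact: val_inj.
  by have := rho_mono lt; rewrite e ltnn.
by have := rho_mono lt; rewrite e ltnn.
Qed.

Definition sig_of : {perm 'I_h} := perm rho_inj.

Lemma sig_mono a b : (phi a < phi b) = (sig_of a < sig_of b).
Proof.
rewrite /sig_of !permE /=.
apply/idP/idP; first exact: rho_mono.
case: (ltngtP (phi a) (phi b)) => // [lt|/val_inj/inj ->]; last by rewrite ltnn.
by move=> lt'; have := ltn_trans lt' (rho_mono lt); rewrite ltnn.
Qed.
End Order.

Definition fcol r n (v : 'I_n) (A : {set 'I_n}) : nat :=
  if v \in A then rkn A v else r + rkn A v.

Lemma part1 r h (H : {set {set 'I_h}}) : is_rgraph r H -> ~ two_locally_large r H ->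
  forall n, C_r r n H <= 2 * r + 1.
Proof.
move=> rg nll n.
have LC : local_coloring r n (2 * r + 1) H.
  exists (@fcol r n); split.
    move=> v A cA; rewrite /fcol.
    have : rkn A v <= r by rewrite -cA /rkn; apply: subset_leq_card; apply/subsetP => u; rewrite inE => /andP[].
    case: (v \in A); lia.
  move=> phi inj.
  pose sg := sig_of inj.
  have [x hx] : exists x, forall i, ~ [/\ 1 <= i, i <= 2 * r + 1 & 2 <= #|Tset r H sg x i|].
    apply: NNPP => hn; apply: nll; exists sg => x.
    apply: NNPP => hn2; apply: hn; exists x => i hi; apply: hn2; by exists i.
  exists (phi x); split; first exact: imset_f.
  move=> A B /imsetP[e1 e1H ->] /imsetP[e2 e2H ->] hf.
  set i := (fcol r (phi x) (phi @: e1)).+1.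
  have mono := sig_mono inj.
  have memT : forall e, e \in H -> fcol r (phi x) (phi @: e) = fcol r (phi x) (phi @: e1) ->
      e \in Tset r H sg x i.
    move=> e eH he; rewrite inE eH /= /i -he /fcol mem_imset_injE // (rk_img inj mono).
    case: (boolP (x \in e)) => xe.
      have : below sg x e < r.
        rewrite -(rg _ eH) (cardsD1 x e) xe add1n ltnS; apply: subset_leq_card.
        by apply/subsetP => u; rewrite !inE => /andP[-> lt]; rewrite andbT; apply: contraTneq lt => ->; rewrite ltnn.
      by rewrite /sg => lt; rewrite lt eqxx.
    by rewrite /sg ltnNge leq_addr /=; apply/eqP; lia.
  have h1 := memT _ e1H erefl.
  have h2 := memT _ e2H (esym hf).
  have i1 : 1 <= i by [].
  have i2 : i <= 2 * r + 1.
    rewrite /sg /i /fcol mem_imset_injE // (rk_img inj mono).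
    have : below (sig_of inj) x e1 <= r.
      by rewrite -(rg _ e1H) /below; apply: subset_leq_card; apply/subsetP => u; rewrite inE => /andP[].
    case: (x \in e1); lia.
  have le1 : #|Tset r H sg x i| <= 1.
    by rewrite leqNgt; apply/negP => lt; apply: (hx i).
  by move/card_le1_eqP: le1 => E; rewrite (E e1 e2 h1 h2).
rewrite /C_r; case: ex_minnP => m _ hmin; apply: hmin.
rewrite /lc_pred; case: excluded_middle_informative => // nP; by exfalso; apply: nP.
Qed.

Lemma rk_U1 n (A : {set 'I_n}) (a v : 'I_n) : ~~ (a < v) -> rkn (a |: A) v = rkn A v.
Proof.
move=> na; rewrite /rkn; apply: eq_card => u; rewrite !inE.
by case: (u =P a) => [->|] //=; rewrite (negbTE na) andbF.
Qed.

Lemma rk_U1_max n (A : {set 'I_n}) (w : 'I_n) : below_all A w -> rkn (w |: A) w = #|A|.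
Proof.
move=> bA; rewrite /rkn; apply: eq_card => u; rewrite !inE.
case: (u =P w) => [->|_] /=; first by rewrite ltnn; apply/esym/negP => /bA; rewrite ltnn.
by case uA: (u \in A) => //=; rewrite bA.
Qed.

Lemma rank_exists n (W : {set 'I_n}) j : j < #|W| -> exists2 v, v \in W & rkn W v = j.
Proof.
move=> hj.
pose s := [seq rkn W v | v <- enum W].
have us : uniq s.
  rewrite map_inj_in_uniq ?enum_uniq // => a b; rewrite !mem_enum => aW bW; exact: rk_inj.
have ss : {subset s <= iota 0 #|W|}.
  move=> i /mapP[v]; rewrite mem_enum => vW ->; rewrite mem_iota /= add0n.
  rewrite /rkn (cardsD1 v W) vW add1n ltnS; apply: subset_leq_card.
  by apply/subsetP => u; rewrite !inE => /andP[-> lt]; rewrite andbT; apply: contraTneq lt => ->; rewrite ltnn.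
have sz : size (iota 0 #|W|) <= size s by rewrite size_iota size_map -cardE.
have [_ e] := uniq_min_size us ss sz.
have : j \in s by rewrite e mem_iota.
by case/mapP => v; rewrite mem_enum => vW ->; exists v.
Qed.

Section Part2.
Variables (r h n k' : nat) (H : {set {set 'I_h}}) (f : 'I_n -> {set 'I_n} -> nat).
Hypothesis fb : forall v (A : {set 'I_n}), #|A| = r -> f v A < k'.+1.

Definition Col := ({ffun 'I_r.+1 -> 'I_k'.+1} * {ffun 'I_r -> 'I_k'.+1})%type.

Definition col (S : {set 'I_n}) : Col :=
  ([ffun i : 'I_r.+1 => if ith S i is Some v then inord (f v (S :\ v)) else ord0],
   [ffun j : 'I_r => if ith S j is Some v then
                       (if ith S r is Some w then inord (f v (S :\ w)) else ord0)
                     else ord0]).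

Lemma colA_val (S : {set 'I_n}) (v : 'I_n) j (hj : j < r.+1) : v \in S -> rkn S v = j ->
  (col S).1 (Ordinal hj) = inord (f v (S :\ v)).
Proof. by move=> vS rv; rewrite ffunE /= (ith_eq vS rv). Qed.

Lemma colB_val (S : {set 'I_n}) (v w : 'I_n) j (hj : j < r) : v \in S -> w \in S -> rkn S v = j -> rkn S w = r ->
  (col S).2 (Ordinal hj) = inord (f v (S :\ w)).
Proof. by move=> vS wS rv rw; rewrite ffunE /= (ith_eq vS rv) (ith_eq wS rw). Qed.

Lemma card_Col : #|{: Col}| = k'.+1 ^ (2 * r + 1).
Proof.
by rewrite card_prod !card_ffun !card_ord -expnD; congr (_ ^ _); lia.
Qed.


Lemma part2_main : is_rgraph r H -> two_locally_large r H ->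
  (forall phi : 'I_h -> 'I_n, injective phi -> exists u, u \in [set phi x | x : 'I_h] /\
     forall A B, A \in copy_edges H phi -> B \in copy_edges H phi -> f u A = f u B -> A = B) ->
  n < Rm r.+1 h.+1 (k'.+1 ^ (2 * r + 1)).
Proof.
move=> rg [sg hsg] LC; rewrite ltnNge; apply/negP => hn.
have hA : Rm r.+1 h.+1 #|{: Col}| <= #|[set: 'I_n]| by rewrite card_Col cardsT card_ord.
have [W [_ mW hW]] := @ramsey n _ r col h.+1 [set: 'I_n] hA.
have W0 : 0 < #|W| by apply: leq_trans mW.
have [w wW bw] := max_split W0.
set W' := W :\ w.
have cW' : h <= #|W'| by move: mW; rewrite (cardsD1 w W) wW add1n ltnS.
have ex : forall x : 'I_h, exists v, (v \in W') && (rkn W' (v : 'I_n) == sg x).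
  move=> x; have hj : sg x < #|W'| by apply: leq_trans (ltn_ord _) cW'.
  by have [v vW rv] := rank_exists hj; exists v; rewrite vW rv eqxx.
have [phi hphi] := fin_all_exists ex.
have phiW x : phi x \in W' by case/andP: (hphi x).
have phirk x : rkn W' (phi x) = sg x by case/andP: (hphi x) => _ /eqP.
have mono : forall a b, (phi a < phi b) = (sg a < sg b).
  move=> a b; apply/idP/idP => [lt|lt].
    by rewrite -!phirk; apply: rk_mono.
  case: (ltngtP (phi a) (phi b)) => // [lt'|/val_inj e].
    by have := rk_mono (phiW _) lt'; rewrite !phirk => /(ltn_trans lt); rewrite ltnn.
  by move: lt; rewrite -!phirk e ltnn.
have inj : injective phi.
  move=> a b e; apply: (@perm_inj _ sg); apply: val_inj; by rewrite /= -!phirk e.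
have [u [/imsetP[x _ ->] hu]] := LC phi inj.
have [i [i1 i2 i3]] := hsg x.
case/card_gt1P: i3 => e1 [e2 [h1 h2 ne]].
have sub (e : {set 'I_h}) : phi @: e \subset W'.
  by apply/subsetP => v /imsetP[y _ ->].
have sWW : W' \subset W by apply: subsetDl.
have ltw v : v \in W' -> v < w by move=> vW; apply: bw.
have cE e : e \in H -> #|phi @: e| = r by move=> eH; rewrite card_imset // rg.
suff key : f (phi x) (phi @: e1) = f (phi x) (phi @: e2).
  move: h1 h2; rewrite !inE => /andP[e1H _] /andP[e2H _].
  have m1 : phi @: e1 \in copy_edges H phi by apply/imsetP; exists e1.
  have m2 : phi @: e2 \in copy_edges H phi by apply/imsetP; exists e2.
  have := hu _ _ m1 m2 key.
  by move/(imset_inj inj) => E; rewrite E eqxx in ne.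
move: h1 h2; rewrite !inE; case hir: (i <= r) => /and3P[e1H xe1 /eqP b1] /and3P[e2H xe2 /eqP b2].
  have hj : i.-1 < r by move: i1 hir; case: i {b1 b2 i2} => //.
  have valB e : e \in H -> x \in e -> (below sg x e).+1 = i ->
      (col (w |: phi @: e)).2 (Ordinal hj) = inord (f (phi x) (phi @: e)).
    move=> eH xe be.
    have wn : w \notin phi @: e by apply/negP => /(subsetP (sub e)); rewrite !inE eqxx.
    rewrite -{2}(setU1K wn); apply: colB_val.
    - by rewrite !inE mem_imset_injE // xe orbT.
    - by rewrite !inE eqxx.
    - rewrite rk_U1; last by rewrite -leqNgt ltnW // ltw.
      by rewrite (rk_img inj mono) -be.
    - by rewrite rk_U1_max ?cE // => t /(subsetP (sub e)) /ltw.
  have S_ok e : e \in H -> (w |: phi @: e) \subset W /\ #|w |: phi @: e| = r.+1.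
    move=> eH; have wn : w \notin phi @: e by apply/negP => /(subsetP (sub e)); rewrite !inE eqxx.
    split; last by rewrite cardsU1 wn cE.
    by rewrite subUset sub1set wW (subset_trans (sub e) sWW).
  have [s1 c1] := S_ok _ e1H; have [s2 c2] := S_ok _ e2H.
  have := congr1 (fun C : Col => C.2 (Ordinal hj)) (hW _ _ s1 s2 c1 c2).
  rewrite /= (valB _ e1H xe1 b1) (valB _ e2H xe2 b2) => /(congr1 (@nat_of_ord _)).
  by rewrite !inordK // fb // cE.
have hj : i - r.+1 < r.+1 by move: i2; lia.
have valA e : e \in H -> x \notin e -> (below sg x e).+1 + r = i ->
    (col (phi x |: phi @: e)).1 (Ordinal hj) = inord (f (phi x) (phi @: e)).
  move=> eH xe be.
  have xn : phi x \notin phi @: e by rewrite mem_imset_injE.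
  rewrite -{2}(setU1K xn); apply: colA_val; first by rewrite !inE eqxx.
  rewrite rk_U1 ?ltnn // (rk_img inj mono); lia.
have S_ok e : e \in H -> x \notin e -> (phi x |: phi @: e) \subset W /\ #|phi x |: phi @: e| = r.+1.
  move=> eH xe; have xn : phi x \notin phi @: e by rewrite mem_imset_injE.
  split; last by rewrite cardsU1 xn cE.
  by rewrite subUset sub1set (subsetP sWW _ (phiW x)) (subset_trans (sub e) sWW).
have [s1 c1] := S_ok _ e1H xe1; have [s2 c2] := S_ok _ e2H xe2.
have := congr1 (fun C : Col => C.1 (Ordinal hj)) (hW _ _ s1 s2 c1 c2).
rewrite /= (valA _ e1H xe1 b1) (valA _ e2H xe2 b2) => /(congr1 (@nat_of_ord _)).
by rewrite !inordK // fb // cE.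
Qed.

End Part2.

From Stdlib Require Import Reals Lra.

Open Scope R_scope.

Lemma ln_le' x y : 0 < x -> x <= y -> ln x <= ln y.
Proof.
move=> x0 [xy|<-]; last by right.
by left; apply: ln_increasing.
Qed.

Lemma exp_le' x y : x <= y -> exp x <= exp y.
Proof. by move=> [xy|<-]; [left; apply: exp_increasing | right]. Qed.

Lemma ln_nonpos x : x <= 0 -> ln x = 0.
Proof. by move=> hx; rewrite /ln; case: Rlt_dec => // h; exfalso; lra. Qed.

Lemma INR_expn (a b : nat) : INR (expn a b) = INR a ^ b.
Proof.
elim: b => [|b IH] //=; rewrite expnS mulnE mult_INR IH //.
Qed.

Lemma INR_leq (a b : nat) : leq a b -> INR a <= INR b.
Proof. by move/leP; apply: le_INR. Qed.

Lemma ln2_le1 : ln 2 <= 1.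
Proof.
rewrite -[X in _ <= X]ln_exp; apply: ln_le'; first lra.
have := exp_ineq1_le 1; lra.
Qed.

Lemma ln3_ge1 : 1 <= ln 3.
Proof.
rewrite -[X in X <= _]ln_exp; apply: ln_le'; first exact: exp_pos.
exact: exp_le_3.
Qed.

Lemma iter_ln_le j : forall (x : R) y, x <= INR (tw j y) -> iter j ln x <= INR y.
Proof.
elim: j => [|j IH] x y hx //.
rewrite iterSr; apply: IH.
case: (Rle_or_lt x 0) => [x0|x0].
  rewrite ln_nonpos //; exact: pos_INR.
apply: (Rle_trans _ _ _ (@ln_le' x _ x0 hx)).
have e2 : INR 2 = 2 by simpl; lra.
rewrite [tw j.+1 y]/= INR_expn e2 ln_pow; last lra.
have := ln2_le1; have := pos_INR (tw j y); nra.
Qed.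

Lemma iter_ln_ge j : forall (x : R) y, INR (tw3 j y) <= x -> INR y <= iter j ln x.
Proof.
elim: j => [|j IH] x y hx //.
rewrite iterSr; apply: IH.
have h3 : 0 < INR (tw3 j.+1 y).
  by rewrite [tw3 j.+1 y]/= INR_expn; apply: pow_lt; rewrite [INR 3]/=; lra.
apply: (Rle_trans _ _ _ _ (@ln_le' _ x h3 hx)).
have e3 : INR 3 = 3 by simpl; lra.
rewrite [tw3 j.+1 y]/= INR_expn e3 ln_pow; last lra.
have := ln3_ge1; have := pos_INR (tw3 j y); nra.
Qed.

Lemma final_real (r Cst k n : nat) : leq 1 Cst -> leq 1 k ->
  1 <= iter_log r.+1 n -> iter_log r n <= INR (muln Cst (expn k (muln r.+1 r.+1))) ->
  exp (- (1 / INR (muln r.+1 r.+1)) * ln (INR Cst)) * lower_bound r n <= INR k.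
Proof.
move=> C0 k0 h1 h2.
rewrite /lower_bound.
set L := iter_log r n in h2 *.
have EL : iter_log r.+1 n = ln L by [].
rewrite EL in h1 *.
have L0 : 0 < L.
  case: (Rle_or_lt L 0) => // hL; rewrite ln_nonpos // in h1; lra.
set q := muln r.+1 r.+1.
have q0 : 0 < INR q by apply: lt_0_INR; apply/ltP; rewrite muln_gt0.
have Cr : 0 < INR Cst by apply: lt_0_INR; apply/ltP.
have kr : 0 < INR k by apply: lt_0_INR; apply/ltP.
set e := 1 / INR q.
have e0 : 0 < e by rewrite /e; apply: Rdiv_lt_0_compat; lra.
have eq1 : e * INR q = 1 by rewrite /e; field; lra.
have lnL0 : 0 < ln L by lra.
have hA : ln (L / ln L) <= ln L.
  rewrite /Rdiv ln_mult //; last by apply: Rinv_0_lt_compat.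
  rewrite ln_Rinv //.
  have : 0 <= ln (ln L).
    rewrite -ln_1; apply: ln_le'; lra.
  lra.
have hB : ln L <= ln (INR Cst) + INR q * ln (INR k).
  rewrite -ln_pow // -ln_mult //; last by apply: pow_lt.
  apply: ln_le' => //.
  by move: h2; rewrite mulnE mult_INR INR_expn.
rewrite /Rpower -exp_plus -[X in _ <= X](exp_ln _ kr).
apply: exp_le'.
have : e * ln (L / ln L) <= e * (ln (INR Cst) + INR q * ln (INR k)).
  apply: Rmult_le_compat_l; lra.
have -> : e * (ln (INR Cst) + INR q * ln (INR k)) = e * ln (INR Cst) + ln (INR k).
  by rewrite Rmult_plus_distr_l -Rmult_assoc eq1 Rmult_1_l.
lra.
Qed.

Close Scope R_scope.

Theorem theorem8 : forall r h : nat, (0 < h)%N ->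
  (forall H : {set {set 'I_h}}, is_rgraph r H -> ~ two_locally_large r H ->
     forall n : nat, (C_r r n H <= 2 * r + 1)%N) /\
  (exists c : R, (0 < c)%R /\ exists N : nat,
     forall H : {set {set 'I_h}}, is_rgraph r H -> two_locally_large r H ->
     forall n : nat, (N <= n)%N -> (c * lower_bound r n <= INR (C_r r n H))%R).
Proof.
move=> r h h0; split; first exact: part1.
pose Cst := 2 * h.+1 * expn (3 * r + 3) (3 * r + 1).
exists (exp (- (1 / INR (r.+1 * r.+1)) * ln (INR Cst)))%R; split; first exact: exp_pos.
exists (maxn r.+1 (tw3 r.+1 1)) => H rg ll n hN.
have hN1 : r.+1 <= n by apply: leq_trans hN; rewrite leq_maxl.
have hN2 : tw3 r.+1 1 <= n by apply: leq_trans hN; rewrite leq_maxr.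
have lcK : local_coloring r n (C_r r n H) H.
  rewrite /C_r; case: ex_minnP => k hk _; move: hk; rewrite /lc_pred.
  case: excluded_middle_informative => //= _ /eqP hh.
  by rewrite hh in h0.
case: (C_r r n H) lcK => [|k'] lcK.
  exfalso; case: lcK => f [fb _].
  have le : r <= n by apply: ltnW.
  pose A := [set widen_ord le i | i : 'I_r].
  have cA : #|A| = r.
    by rewrite card_imset ?card_ord // => a b /(congr1 val) /= /val_inj.
  have n0 : 0 < n by apply: leq_trans hN1.
  by have := fb (Ordinal n0) A cA.
case: lcK => f [fb LC].
have hlt := @part2_main r h n k' H f fb rg ll LC.
have hmn := @main_nat h.+1 k'.+1 r (ltn0Sn _) (ltn0Sn _).
apply: final_real.
- rewrite /Cst; have : 0 < expn (3 * r + 3) (3 * r + 1) by rewrite expn_gt0 addnS.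
  lia.
- by [].
- by have := @iter_ln_ge r.+1 (INR n) 1 (INR_leq hN2).
- apply: iter_ln_le; apply: INR_leq.
  exact: leq_trans (ltnW hlt) (leq_trans (leqnSn _) hmn).
Qed.
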